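(* Let $n$ be even and let $\mathrm{TH}_{n/2}:\{0,1\}^n\rightarrow\{0,1\}$ be defined by $\mathrm{TH}_{n/2}(x)=1$ iff $|x|>n/2$. Then $WUC(\mathrm{TH}_{n/2})=O(\log n)$ while $\overline{s}(\mathrm{TH}_{n/2})=\Omega(\sqrt{n})$.
   Context: $|x|$ is the Hamming weight. A classical randomized query algorithm adaptively queries input bits $x_i$ (each query costs one) and outputs a bit; for an algorithm whose minimum over inputs of the probability of outputting $f(x)$ is $p>1/2$, its bias is $\beta=p-1/2$ and its weakly unbounded cost is (number of queries) $+\log(1/(2\beta))$; $WUC(f)$ is the minimum weakly unbounded cost over classical randomized algorithms. The sensitivity of $f$ at $x$ is $s_x(f)=\sum_{i\in[n]}|f(x)-f(x\oplus e_i)|$, where $e_i$ has a 1 exactly in position $i$, and the average sensitivity is $\overline{s}(f)=2^{-n}\sum_{x\in\{0,1\}^n}s_x(f)$. $\log$ is base 2. *)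

(* Defs.v *)
From HB Require Import structures.
From mathcomp Require Import all_boot all_order all_algebra.
From mathcomp Require Import all_classical all_reals all_analysis.
Set Implicit Arguments. Unset Strict Implicit. Unset Printing Implicit Defensive.
Import Order.TTheory GRing.Theory Num.Theory.
Local Open Scope ring_scope.

Definition cube (n : nat) := {ffun 'I_n -> bool}.

Definition hw n (x : cube n) : nat := #|[set i | x i]|.

Definition flip n (x : cube n) (i : 'I_n) : cube n :=
  [ffun j => if j == i then ~~ x j else x j].

(* TH_{n/2}(x) = 1 iff |x| > n/2   (written 2|x| > n) *)
Definition TH n (x : cube n) : bool := (n < 2 * hw x)%N.

Definition sens n (f : cube n -> bool) (x : cube n) : nat :=
  #|[set i | f x != f (flip x i)]|.

Definition avg_sens (R : realType) n (f : cube n -> bool) : R :=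
  (2 ^+ n)^-1 * \sum_(x : cube n) (sens f x)%:R.

(* deterministic query algorithms = decision trees *)
Inductive dtree (n : nat) : Type :=
| Leaf of bool
| Node of 'I_n & dtree n & dtree n.

Fixpoint eval_dt n (t : dtree n) (x : cube n) : bool :=
  match t with
  | Leaf b => b
  | Node i t0 t1 => if x i then eval_dt t1 x else eval_dt t0 x
  end.

Fixpoint depth n (t : dtree n) : nat :=
  match t with
  | Leaf _ => 0
  | Node _ t0 t1 => (maxn (depth t0) (depth t1)).+1
  end.

(* a classical randomized query algorithm: a probability distribution
   (finite list of (weight, decision tree)) over deterministic ones *)
Definition ralg (R : realType) n := seq (R * dtree n).

Definition valid_ralg (R : realType) n (A : ralg R n) : Prop :=
  all (fun p => 0 <= p.1) A /\ \sum_(p <- A) p.1 = 1.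

Definition nqueries (R : realType) n (A : ralg R n) : nat :=
  \max_(p <- A) depth p.2.

Definition succ_prob (R : realType) n (A : ralg R n) (f : cube n -> bool)
  (x : cube n) : R :=
  \sum_(p <- A | eval_dt p.2 x == f x) p.1.

Definition min_succ (R : realType) n (A : ralg R n) (f : cube n -> bool) : R :=
  \big[Order.min/1]_(x : cube n) succ_prob A f x.

Definition bias (R : realType) n (A : ralg R n) (f : cube n -> bool) : R :=
  min_succ A f - 2^-1.

Definition log2 (R : realType) (x : R) : R := ln x / ln 2.

(* weakly unbounded cost (meaningful when bias > 0) *)
Definition wucost (R : realType) n (A : ralg R n) (f : cube n -> bool) : R :=
  (nqueries A)%:R + log2 ((2 * bias A f)^-1).

(* A computes f with positive bias and weakly unbounded cost at most c;
   WUC(f) <= c  iff such an A exists (WUC is a minimum) *)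
Definition wuc_le (R : realType) n (f : cube n -> bool) (c : R) : Prop :=
  exists A : ralg R n, valid_ralg A /\ 0 < bias A f /\ wucost A f <= c.

(* Main.v *)
Require Import Defs.
From HB Require Import structures.
From mathcomp Require Import all_boot all_order all_algebra.
From mathcomp Require Import all_classical all_reals all_analysis.
From mathcomp Require Import zify ring lra.
Import Order.TTheory GRing.Theory Num.Theory.
Local Open Scope ring_scope.
Set Implicit Arguments.

Section P1.
Variable R : realType.

Definition alg n : ralg R n :=
  ((n.+1%:R : R)^-1, Leaf n false) ::
  [seq ((n.+1%:R : R)^-1, Node i (Leaf n false) (Leaf n true)) | i <- enum 'I_n].

Lemma sum_enum_const n (P : pred 'I_n) (w : R) :
  \sum_(i <- enum 'I_n | P i) w = w *+ #|P|.
Proof. by rewrite big_enum_cond /= sumr_const. Qed.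

Lemma alg_valid n : valid_ralg (alg n).
Proof.
split.
  rewrite /alg /= invr_ge0 ler0n /= all_map; apply/allP => i _ /=.
  by rewrite invr_ge0 ler0n.
rewrite /alg big_cons big_map /=.
rewrite (eq_bigl (fun _ => true)) // sum_enum_const card_ord.
by rewrite addrC -mulrSr -[_ *+ n.+1]mulr_natr mulVf // pnatr_eq0.
Qed.

Lemma alg_nq n : (nqueries (alg n) <= 1)%N.
Proof.
rewrite /nqueries /alg big_cons big_map /= geq_max /=.
by apply: (big_ind (fun k => k <= 1)%N) => // a b; rewrite geq_max => -> ->.
Qed.

Lemma cardF n (x : cube n) : (#|[pred i | x i == false]| + hw x)%N = n.
Proof.
rewrite /hw addnC; have := cardC [set i | x i]; rewrite card_ord => H.
rewrite -[in RHS]H; congr (_ + _)%N.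
by apply: eq_card => i; rewrite !inE; case: (x i).
Qed.

Lemma cardT n (x : cube n) : #|[pred i | x i == true]| = hw x.
Proof. by rewrite /hw; apply: eq_card => i; rewrite !inE; case: (x i). Qed.

Lemma keyR n k : (n.+2 <= 2 * k)%N ->
  (n.+2%:R : R) <= (n.+1%:R : R)^-1 *+ k * (2 * n.+1%:R).
Proof.
move=> h.
have -> : (n.+1%:R : R)^-1 *+ k * (2 * n.+1%:R) = ((2 * k)%N)%:R.
  rewrite -mulr_natr natrM; field; by rewrite addrC natr1 pnatr_eq0.
by rewrite ler_nat.
Qed.

Lemma alg_succ n (x : cube n) : ~~ odd n ->
  (n.+2%:R : R) / (2 * n.+1%:R) <= succ_prob (alg n) (@TH n) x.
Proof.
move=> ev.
rewrite /succ_prob /alg big_cons big_map /=.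
rewrite (eq_bigl (fun i => x i == TH x)); last by move=> i /=; case: (x i).
rewrite sum_enum_const.
have Hn : (0 : R) < n.+1%:R by rewrite ltr0n.
rewrite ler_pdivrMr ?mulr_gt0 //.
case E: (TH x) => /=.
- apply: keyR; rewrite (_ : #|_| = hw x); last exact: cardT.
  move: E; rewrite /TH => h.
  have := even_halfK ev; move: h; set m := n./2; lia.
- rewrite addrC -mulrSr; apply: keyR.
  have h1 := @cardF n x.
  move: E; rewrite /TH => /negbT; rewrite -leqNgt => h.
  have := even_halfK ev; move: h h1; set m := n./2; set c := #|_|. lia.
Qed.

Lemma ln_mono (a b : R) : 0 < a -> a <= b -> ln a <= ln b.
Proof. move=> a0 ab; rewrite ler_ln // posrE; exact: (lt_le_trans a0 ab). Qed.

Lemma part1 : exists (C : R) (N : nat), 0 < C /\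
     forall n : nat, ~~ odd n -> (N <= n)%N ->
       wuc_le (@TH n) (C * log2 (n%:R : R)).
Proof.
exists 3, 2%N; split => // n ev n2.
set t : R := (n.+2%:R : R) / (2 * n.+1%:R).
have Hn : (0 : R) < n.+1%:R by rewrite ltr0n.
have t1 : t <= 1.
  rewrite /t ler_pdivrMr ?mulr_gt0 // mul1r -natrM ler_nat; lia.
have ms : t <= min_succ (alg n) (@TH n).
  rewrite /min_succ; apply: (big_ind (fun y => t <= y)) => //.
    by move=> a b ha hb; rewrite le_min ha hb.
  by move=> x _; apply: alg_succ.
have tb : t - 2^-1 = (2 * n.+1%:R)^-1.
  rewrite /t; field; rewrite addrC natr1 pnatr_eq0 //.
have bpos : (2 * n.+1%:R)^-1 <= bias (alg n) (@TH n).
  by rewrite /bias -tb lerD2r.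
have wpos : (0:R) < (2 * n.+1%:R)^-1 by rewrite invr_gt0 mulr_gt0.
exists (alg n); split; first exact: alg_valid.
split; first exact: (lt_le_trans wpos bpos).
have b2 : (n.+1%:R : R)^-1 <= 2 * bias (alg n) (@TH n).
  have -> : (n.+1%:R : R)^-1 = 2 * (2 * n.+1%:R)^-1.
    field; rewrite addrC natr1 pnatr_eq0 //.
  by rewrite ler_pM2l.
have p1 : (0:R) < n.+1%:R^-1 by rewrite invr_gt0.
have p2 : 0 < 2 * bias (alg n) (@TH n) := lt_le_trans p1 b2.
have inv : (2 * bias (alg n) (@TH n))^-1 <= n.+1%:R.
  rewrite -[X in _ <= X]invrK ler_pV2 //.
    by rewrite inE p2 unitfE gt_eqF.
  by rewrite inE p1 unitfE gt_eqF.
have ln2p : (0:R) < ln 2 by apply: ln_gt0; rewrite ltr1n.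
have nq : ((nqueries (alg n))%:R : R) <= 1 by rewrite -[X in _ <= X]/(1%:R) ler_nat alg_nq.
have npos : (0:R) < n%:R by rewrite ltr0n; lia.
have l1 : ln (2 * bias (alg n) (@TH n))^-1 <= ln 2 + ln n%:R.
  rewrite -lnM ?posrE //.
  apply: ln_mono; first by rewrite invr_gt0.
  apply: (le_trans inv); rewrite -natrM ler_nat; lia.
have l2 : ln 2 <= ln (n%:R : R) by apply: ln_mono => //; rewrite ler_nat.
rewrite /wucost /log2.
apply: (le_trans (lerD nq (lexx _))).
rewrite -(ler_pM2r ln2p) mulrDl mul1r -mulrA mulVf ?gt_eqF // mulr1.
rewrite -mulrA mulfVK ?gt_eqF //.
lra.
Qed.
End P1.
Lemma bin_step m : (m.+1 * 'C(m.+1.*2, m.+1) = 2 * m.*2.+1 * 'C(m.*2, m))%N.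
Proof.
have h1 := mul_bin_diag m.*2.+1 m.
have hs : 'C(m.*2.+1, m.+1) = 'C(m.*2.+1, m).
  rewrite -(bin_sub (n:=m.*2.+1) (m:=m.+1)); last lia.
  congr 'C(_, _); lia.
have -> : m.+1.*2 = (m.*2.+1).+1 by lia.
rewrite binS hs; rewrite /= hs in h1; lia.

Qed.

Lemma bin_lb m : (0 < m)%N -> (16 ^ m <= 4 * m * 'C(m.*2, m) ^ 2)%N.
Proof.
elim: m => // m IH _.
case: m IH => [|m] IH; first by [].
have IH' := IH isT.
have hs := bin_step m.+1.
set a := 'C(m.+1.*2, m.+1) in IH' hs *.
set b := 'C(m.+2.*2, m.+2) in hs *.
rewrite expnS.
suff : (m.+2 * (16 * 16 ^ m.+1) <= m.+2 * (4 * m.+2 * b ^ 2))%N.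
  by rewrite leq_pmul2l.
have e : (m.+2 * (4 * m.+2 * b ^ 2) = 4 * (2 * (m.+1).*2.+1 * a) ^ 2)%N.
  rewrite -hs; ring.
rewrite e.
have : (m.+2 * 16 ^ m.+1 <= m.+2 * (4 * m.+1 * a ^ 2))%N by rewrite leq_pmul2l.
set P := (16 ^ m.+1)%N. set Q := (a ^ 2)%N.
rewrite (_ : (2 * (m.+1).*2.+1 * a) ^ 2 = 4 * (m.+1).*2.+1 ^ 2 * Q)%N; last by rewrite /Q; ring.
nia.
Qed.

Lemma hw_flip n (x : cube n) i : x i = false -> hw (flip x i) = (hw x).+1.
Proof.
move=> xi; rewrite /hw.
have -> : [set j | flip x i j] = i |: [set j | x j].
  apply/setP => j; rewrite !inE /flip ffunE.
  by case: eqP => [->|_]; rewrite ?xi.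
by rewrite cardsU1 inE xi.
Qed.

Definition g n (B : {set 'I_n}) : cube n := [ffun i => i \in B].

Lemma hw_g n (B : {set 'I_n}) : hw (g B) = #|B|.
Proof. by rewrite /hw; apply: eq_card => i; rewrite !inE ffunE. Qed.

Lemma sens_g m (B : {set 'I_(m.*2)}) : #|B| = m -> (m <= sens (@TH _) (g B))%N.
Proof.
move=> hB.
have : [set i | i \notin B] \subset [set i | TH (g B) != TH (flip (g B) i)].
  apply/fintype.subsetP => i; rewrite !inE => iB.
  rewrite /TH hw_flip ?ffunE ?(negbTE iB) // hw_g hB; lia.
move/subset_leq_card; rewrite /sens.
suff -> : #|[set i | i \notin B]| = m by [].
have -> : [set i | i \notin B] = ~: B by apply/setP => i; rewrite !inE.
have := cardsC B; rewrite card_ord hB; lia.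
Qed.

Lemma sum_sens m :
  (m * 'C(m.*2, m) <= \sum_(x : cube m.*2) sens (@TH _) x)%N.
Proof.
rewrite (reindex (@g m.*2)) /=; last first.
  exists (fun x : cube m.*2 => [set i | x i]) => x _.
    by apply/setP => i; rewrite !inE ffunE.
  by apply/ffunP => i; rewrite ffunE inE.
rewrite (bigID (fun B : {set 'I_m.*2} => #|B| == m)) /=.
apply: leq_trans (leq_addr _ _).
have -> : 'C(m.*2, m) = #|[set B : {set 'I_m.*2} | #|B| == m]| by rewrite card_draws card_ord.
rewrite -sum1_card big_distrr /= muln1.
rewrite [X in (X <= _)%N](eq_bigl (fun B : {set 'I_m.*2} => #|B| == m)); last by move=> B; rewrite inE.
by apply: leq_sum => B /eqP hB; apply: sens_g.
Qed.

Lemma nat_key m : (0 < m)%N ->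
  (m.*2 * (2 ^ m.*2) ^ 2 <= 16 * (m * 'C(m.*2, m)) ^ 2)%N.
Proof.
move=> m0.
have e : ((2 ^ m.*2) ^ 2 = 16 ^ m)%N.
  by rewrite -expnM (_ : 16 = 2 ^ 4)%N // -expnM; congr (_ ^ _)%N; lia.
rewrite e; have := @bin_lb m m0; set C := 'C(_, _); set P := (16 ^ m)%N; nia.
Qed.

Lemma part2 (R : realType) : exists (c : R) (N : nat), 0 < c /\
     forall n : nat, ~~ odd n -> (N <= n)%N ->
       c * Num.sqrt (n%:R : R) <= avg_sens R (@TH n).
Proof.
exists (4^-1), 2%N; split => // n ev n2.
have [m em] : exists m, n = m.*2 by exists n./2; rewrite even_halfK.
subst n.
have m0 : (0 < m)%N by lia.
set K := (m * 'C(m.*2, m))%N.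
set a := avg_sens R (@TH m.*2).
have p2 : (0 : R) < 2 ^+ m.*2 by rewrite exprn_gt0.
have ha : K%:R / 2 ^+ m.*2 <= a.
  rewrite /a /avg_sens mulrC -natr_sum ler_pM2l ?invr_gt0 // ler_nat.
  exact: sum_sens.
have hk : (m.*2)%:R * (2 ^+ m.*2) ^+ 2 <= 16 * (K%:R : R) ^+ 2.
  have := @nat_key m m0; rewrite -(ler_nat R) !natrM !natrX /K => h.
  by rewrite !expr2.
have k0 : (0 : R) <= K%:R / 2 ^+ m.*2 by rewrite divr_ge0 // ltW.
have a0 : 0 <= a := le_trans k0 ha.
rewrite -(ler_pM2l (_ : (0:R) < 4)) // mulrA mulfV ?pnatr_eq0 // mul1r.
have -> : 4 * a = Num.sqrt ((4 * a) ^+ 2) by rewrite sqrtr_sqr ger0_norm // mulr_ge0.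
rewrite ler_sqrt; last by rewrite sqr_ge0.
have hsq : (4 * (K%:R / 2 ^+ m.*2)) ^+ 2 <= (4 * a) ^+ 2.
  rewrite !expr2; apply: ler_pM; rewrite ?mulr_ge0 //; by rewrite ler_pM2l.
apply: le_trans hsq.
rewrite exprMn expr_div_n mulrA ler_pdivlMr ?exprn_gt0 //.
apply: (le_trans hk); rewrite (_ : (4:R) ^+ 2 = 16) //; rewrite expr2; lra.
Qed.

Theorem lemma11 (R : realType) :
  (exists (C : R) (N : nat), 0 < C /\
     forall n : nat, ~~ odd n -> (N <= n)%N ->
       wuc_le (@TH n) (C * log2 (n%:R : R)))
  /\
  (exists (c : R) (N : nat), 0 < c /\
     forall n : nat, ~~ odd n -> (N <= n)%N ->
       c * Num.sqrt (n%:R : R) <= avg_sens R (@TH n)).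
Proof. split; [exact: part1 | exact: part2]. Qed.
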